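(* Let $H$ be a complex separable Hilbert space and let $S,T,X\in B(H)$ with $S$ and $T$ positive. Then $$\|SX-XT\|_2\le\|X\|_2\left(\|S\|_2^2+\|T\|_2^2\right)^{1/2}.$$
   Context: $\|\cdot\|_2$ denotes the Hilbert–Schmidt norm $\|Z\|_2=(\operatorname{tr}(Z^*Z))^{1/2}$ (possibly $+\infty$). *)

(* Defs.v *)
From HB Require Import structures.
From mathcomp Require Import all_boot all_order all_algebra.
From mathcomp Require Import all_classical all_reals all_analysis.
From mathcomp Require Import complex.
Set Implicit Arguments. Unset Strict Implicit. Unset Printing Implicit Defensive.
Import Order.TTheory GRing.Theory Num.Theory.
Local Open Scope ring_scope.
Local Open Scope classical_set_scope.

(* The separable complex Hilbert space H is realised (up to unitary
   isomorphism) as l^2(I) for a countable index set I, with its standard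
   orthonormal basis (e_j)_{j in I}.  Vectors are functions I -> R[i];
   only the square-summable ones are elements of H. *)
Section HS.
Variables (R : realType) (I : countType).
Local Notation C := (R[i]).

Definition cnorm2 (z : C) : R := complex.Re z ^+ 2 + complex.Im z ^+ 2.

Definition sqnorm (x : I -> C) : \bar R :=
  (\esum_(i in [set: I]) (cnorm2 (x i))%:E)%E.

Definition l2 (x : I -> C) : Prop := (sqnorm x < +oo)%E.

Definition rsum (g : I -> R) : R :=
  fine (\esum_(i in [set: I]) (Num.max (g i) 0)%:E)%E
  - fine (\esum_(i in [set: I]) (Num.max (- g i) 0)%:E)%E.

Definition csum (f : I -> C) : C :=
  Complex (rsum (fun i => complex.Re (f i))) (rsum (fun i => complex.Im (f i))).

Definition inner (x y : I -> C) : C := csum (fun i => x i * (y i)^*).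

Definition basis (j : I) : I -> C := fun i => if i == j then 1 else 0.

(* operators are represented as maps on I -> C; only their action on l2 matters *)
Definition op := (I -> C) -> (I -> C).

Definition bounded_op (A : op) : Prop :=
  (forall (a : C) (x y : I -> C), l2 x -> l2 y ->
     A (fun i => a * x i + y i) = (fun i => a * A x i + A y i)) /\
  exists M : R, forall x, l2 x -> l2 (A x) /\ (sqnorm (A x) <= (M ^+ 2)%:E * sqnorm x)%E.

(* positive operator: <A x, x> >= 0 (in particular real) for all x in H *)
Definition positive_op (A : op) : Prop :=
  bounded_op A /\ forall x, l2 x -> 0 <= inner (A x) x.

Definition op_comp (A B : op) : op := fun x => A (B x).
Definition op_sub (A B : op) : op := fun x i => A x i - B x i.

(* tr(Z^* Z) = sum_j ||Z e_j||^2, in [0, +oo] *)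
Definition hs_sq (Z : op) : \bar R := (\esum_(j in [set: I]) sqnorm (Z (basis j)))%E.

Definition hs_norm (Z : op) : \bar R := sqrte (hs_sq Z).

End HS.

(* Main.v *)
Require Import Defs.
From HB Require Import structures.
From mathcomp Require Import all_boot all_order all_algebra.
From mathcomp Require Import all_classical all_reals all_analysis.
From mathcomp Require Import complex.
Import Order.TTheory GRing.Theory Num.Theory.
Local Open Scope ring_scope.

From mathcomp Require Import spectral sesquilinear ring lra.

Module Helpers.
Import Defs.
Set Implicit Arguments. Unset Strict Implicit. Unset Printing Implicit Defensive.
Import numFieldNormedType.Exports.
Local Open Scope classical_set_scope.
Section Fin.
Local Open Scope sesquilinear_scope.
Variable C : numClosedFieldType.
Implicit Types (n : nat).
Definition qf n (A : 'M[C]_n) (u v : 'rV[C]_n) : C := (u *m A *m v^t*) 0 0.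
Definition psdm n (A : 'M[C]_n) := forall v : 'rV[C]_n, 0 <= qf A v v.

Lemma qf_exp n (A : 'M[C]_n) u v c :
  qf A (u + c *: v) (u + c *: v) =
  qf A u u + c * c^* * qf A v v + c * qf A v u + c^* * qf A u v.
Proof.
rewrite /qf linearD /= linearZ /= map_mxD map_mxZ.
rewrite !mulmxDl !mulmxDr -!scalemxAl -!scalemxAr !mxE.

by rewrite -!/(qf _ _ _); ring.
Qed.
End Fin.
Section Fin2.
Local Open Scope sesquilinear_scope.
Variable C : numClosedFieldType.
Lemma psd_herm n (A : 'M[C]_n) : psdm A -> forall u v, qf A u v = (qf A v u)^*.
Proof.
move=> hA u v.
have h1 := geC0_conj (hA (u + 1 *: v)); have h2 := geC0_conj (hA (u + 'i *: v)).
have hu := geC0_conj (hA u); have hv := geC0_conj (hA v).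
rewrite qf_exp in h1; rewrite qf_exp in h2.
move: h1 h2; set x := qf A u v; set y := qf A v u; set a := qf A u u; set b := qf A v v.
move: hu hv; rewrite -/a -/b => hu hv.
rewrite !rmorphD !rmorphM /= !conjCK conjCi rmorph1 hu hv !mul1r.
move=> E1 E2.
have D1 : (a + b + y^* + x^*) - (a + b + y + x) = 0 by rewrite E1 subrr.
have D2 : (a + - 'i * 'i * b + - 'i * y^* + 'i * x^*) - (a + 'i * - 'i * b + 'i * y + - 'i * x) = 0.
  by rewrite E2 subrr.
have e2 : (a + - 'i * 'i * b + - 'i * y^* + 'i * x^*) - (a + 'i * - 'i * b + 'i * y + - 'i * x)
   = 'i * (x^* - y^* - y + x) by ring.
rewrite e2 in D2.
move/eqP: D2; rewrite mulf_eq0 (negPf (neq0Ci C)) /= => /eqP D2.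
have : (a + b + y^* + x^*) - (a + b + y + x) + (x^* - y^* - y + x) = 0 by rewrite D1 D2 addr0.
have -> : (a + b + y^* + x^*) - (a + b + y + x) + (x^* - y^* - y + x) = 2%:R * (x^* - y) by ring.
move/eqP; rewrite mulf_eq0 pnatr_eq0 /= subr_eq0 => /eqP <-.
by rewrite conjCK.
Qed.
End Fin2.
Section Fin3.
Local Open Scope sesquilinear_scope.
Variable C : numClosedFieldType.

Lemma conj_delta m n (i : 'I_m) (j : 'I_n) : (delta_mx i j : 'M[C]_(m, n)) ^ Num.conj = delta_mx i j.
Proof. by apply/matrixP => a b; rewrite !mxE; case: (_ && _); rewrite ?rmorph1 ?rmorph0. Qed.

Lemma qf_delta n (A : 'M[C]_n) i j : qf A (delta_mx 0 i) (delta_mx 0 j) = A i j.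
Proof.
by rewrite /qf trmx_delta conj_delta -rowE -colE !mxE.
Qed.

Lemma psd_hermsym n (A : 'M[C]_n) : psdm A -> A \is hermsymmx.
Proof.
move=> hA; apply/is_hermitianmxP; rewrite expr0 scale1r.
apply/matrixP => i j; rewrite !mxE -!qf_delta.
exact: psd_herm.
Qed.

Definition fro n (A : 'M[C]_n) := \tr (A *m A ^t*).

Lemma froE n (A : 'M[C]_n) : fro A = \sum_i \sum_j `|A i j| ^+ 2.
Proof.
rewrite /fro /mxtrace; apply: eq_bigr => i _; rewrite mxE.
by apply: eq_bigr => j _; rewrite !mxE normCK.
Qed.

Lemma unitary_tV n (P : 'M[C]_n) : P \is unitarymx -> P ^t* *m P = 1%:M.
Proof.
move=> hP; rewrite -invmx_unitary //; exact: mulVmx (unitarymx_unit hP).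
Qed.

Lemma fro_unitary n (P Q A : 'M[C]_n) : P \is unitarymx -> Q \is unitarymx ->
  fro (P *m A *m Q ^t*) = fro A.
Proof.
move=> hP hQ; rewrite /fro !trmx_mul !map_mxM trmxCK.
rewrite -!mulmxA (mulmxA (Q ^t*)) (unitary_tV hQ) mul1mx.
rewrite mxtrace_mulC -!mulmxA (unitary_tV hP) mulmx1 //.
Qed.
End Fin3.
Section Fin4.
Local Open Scope sesquilinear_scope.
Variable C : numClosedFieldType.

Lemma spectral_psd n (S : 'M[C]_n) : psdm S ->
  exists P : 'M[C]_n, exists d : 'rV[C]_n,
   [/\ P \is unitarymx, S = P ^t* *m diag_mx d *m P & forall k, 0 <= d 0 k].
Proof.
move=> hS.
have hN := hermitian_normalmx (psd_hermsym hS).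
have hP := spectral_unitarymx S.
have E := orthomx_spectralP hN.
rewrite invmx_unitary // in E.
set P := spectralmx S in hP E *; set d := spectral_diag S in E *.
exists P, d; split => // k.
have -> : d 0 k = (P *m S *m P ^t*) k k.
  rewrite [in RHS]E !mulmxA (unitarymxP hP) mul1mx -mulmxA (unitarymxP hP) mulmx1.
  by rewrite mxE eqxx mulr1n.
rewrite -qf_delta /qf !mulmxA -rowE -mulmxA -map_mxM -trmx_mul -rowE -mulmxA.
rewrite mulmxA; exact: hS.
Qed.

Lemma fro_ge0 n (A : 'M[C]_n) : 0 <= fro A.
Proof. by rewrite froE; apply: sumr_ge0 => i _; apply: sumr_ge0 => j _; exact: exprn_ge0. Qed.

Lemma fro_diag n (d : 'rV[C]_n) : fro (diag_mx d) = \sum_i `|d 0 i| ^+ 2.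
Proof.
rewrite froE; apply: eq_bigr => i _.
rewrite (bigD1 i) //= big1 ?addr0; first by rewrite mxE eqxx mulr1n.
by move=> j /negPf ji; rewrite mxE eq_sym ji mulr0n normr0 expr0n.
Qed.

Lemma le_term n (F : 'I_n -> C) i : (forall j, 0 <= F j) -> F i <= \sum_j F j.
Proof.
move=> h; rewrite (bigD1 i) //= lerDl; apply: sumr_ge0 => j _; exact: h.
Qed.

Theorem fin_main n (S T X : 'M[C]_n) : psdm S -> psdm T ->
  fro (S *m X - X *m T) <= fro X * (fro S + fro T).
Proof.
move=> hS hT.
have [P [d [hP ES hd]]] := spectral_psd hS.
have [Q [e [hQ ET he]]] := spectral_psd hT.
have hPt : P ^t* \is unitarymx by rewrite trmxC_unitary.
have hQt : Q ^t* \is unitarymx by rewrite trmxC_unitary.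
have fS : fro S = fro (diag_mx d).
  by rewrite ES -(fro_unitary (diag_mx d) hPt hPt) trmxCK.
have fT : fro T = fro (diag_mx e).
  by rewrite ET -(fro_unitary (diag_mx e) hQt hQt) trmxCK.
set Y := P *m X *m Q ^t*.
have fX : fro X = fro Y by rewrite /Y fro_unitary.
have fZ : fro (S *m X - X *m T) = fro (diag_mx d *m Y - Y *m diag_mx e).
  rewrite -(fro_unitary (S *m X - X *m T) hP hQ); congr fro.
  rewrite mulmxBr mulmxBl /Y ES ET !mulmxA (unitarymxP hP) mul1mx.
  by rewrite -!mulmxA (unitarymxP hQ) mulmx1.
rewrite fS fT fX fZ !fro_diag !froE mul_diag_mx mul_mx_diag; clearbody Y.
rewrite mulr_suml; apply: ler_sum => i _; rewrite mulr_suml; apply: ler_sum => j _.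
rewrite !mxE [d 0 i * _]mulrC -mulrBr normrM exprMn ler_wpM2l ?exprn_ge0 //.
apply: (@le_trans _ _ (`|d 0 i| ^+ 2 + `|e 0 j| ^+ 2)).
  rewrite (ger0_norm (hd i)) (ger0_norm (he j)).
  have hdi := hd i; have hej := he j.
  have rr : d 0 i - e 0 j \is Num.real by rewrite rpredB ?ger0_real.
  rewrite real_normK // sqrrB -addrA [_ + e 0 j ^+ 2]addrC addrA.
  by rewrite lerBlDr lerDl mulrn_wge0 // mulr_ge0.
apply: lerD.
  by rewrite (bigD1 i) //= lerDl sumr_ge0 // => k _; exact: exprn_ge0.
by rewrite (bigD1 j) //= lerDl sumr_ge0 // => k _; exact: exprn_ge0.
Qed.
End Fin4.

Section Inf.
Variables (R : realType) (I : countType).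
Local Notation C := (R[i]).

Definition vec (y : I -> C) (c : nat) : C := oapp y 0 (@pickle_inv I c).

Lemma esum_series (f : I -> \bar R) : (forall i, (0 <= f i)%E) ->
  (\esum_(i in [set: I]) f i = \sum_(c <oo) oapp f 0%E (@pickle_inv I c))%E.
Proof.
move=> f0.
have g0 : forall c, (0 <= oapp f 0%E (@pickle_inv I c))%E.
  by move=> c; case: pickle_inv => //=.
rewrite nneseries_esumT // (esumID (range (@pickle I))) //.
rewrite [X in (_ + X)%E]esum1 ?adde0; last first.
  move=> c [_ /= hc]; case E: pickle_inv => [i|] //=; exfalso; apply: hc.
  by exists i => //; have := @pickle_invK I c; rewrite E.
rewrite setTI esum_image; last by move=> x y _ _; exact: (pcan_inj (@pickleK_inv I)).
by apply: eq_esum => i _; rewrite pickleK_inv.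
Qed.

Lemma cnorm2_ge0 (z : C) : 0 <= cnorm2 z.
Proof. by rewrite /cnorm2 addr_ge0 // sqr_ge0. Qed.

Lemma cnorm2_0 : cnorm2 (0 : C) = 0.
Proof. by rewrite /cnorm2 /= expr0n /= addr0. Qed.

Lemma sqnorm_series (y : I -> C) :
  sqnorm y = (\sum_(c <oo) (cnorm2 (vec y c))%:E)%E.
Proof.
rewrite /sqnorm esum_series; last by move=> i; rewrite lee_fin cnorm2_ge0.
apply: eq_eseriesr => c _; rewrite /vec; case: pickle_inv => //= .
by rewrite cnorm2_0.
Qed.

Lemma ser_fin (f : nat -> \bar R) n : (forall c, (0 <= f c)%E) ->
  (forall c, (n <= c)%N -> f c = 0%E) ->
  (\sum_(c <oo) f c = \sum_(c < n) f c)%E.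
Proof.
move=> f0 fn; rewrite (nneseries_split 0 n) // add0n eseries0 ?adde0 //.
by rewrite big_mkord.
by move=> i hi _; apply: fn.
Qed.

Lemma vec_out (y : I -> C) n c : (forall i, (n <= pickle i)%N -> y i = 0) ->
  (n <= c)%N -> vec y c = 0.
Proof.
move=> hy hc; rewrite /vec; case E: pickle_inv => [i|] //=.
apply: hy; have := @pickle_invK I c; rewrite E /= => ->; exact: hc.
Qed.

Lemma fin_l2 (y : I -> C) n : (forall i, (n <= pickle i)%N -> y i = 0) -> l2 y.
Proof.
move=> hy; rewrite /l2 sqnorm_series (@ser_fin _ n).
- by rewrite sumEFin ltry.
- by move=> c; rewrite lee_fin cnorm2_ge0.
- by move=> c hc; rewrite (vec_out hy hc) cnorm2_0.
Qed.

Lemma basis_l2 (j : I) : l2 (basis R j).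
Proof.
apply: (fin_l2 (n := (pickle j).+1)) => i hi; rewrite /basis.
case: eqP => // eij; move: hi; rewrite eij ltnn //.
Qed.

Definition trunc (y : I -> C) m : I -> C := fun i => if (pickle i < m)%N then y i else 0.

Lemma trunc_l2 y m : l2 (trunc y m).
Proof. by apply: (fin_l2 (n := m)) => i hi; rewrite /trunc ltnNge hi. Qed.

Lemma zero_l2 : l2 (fun _ : I => (0 : C)).
Proof. by apply: (fin_l2 (n := 0)). Qed.

Lemma lin0 (A : op R I) : bounded_op A -> A (fun _ => 0) = (fun _ => 0).
Proof.
move=> [hl _]; have := hl (-1) _ _ zero_l2 zero_l2.
have -> : (fun i : I => -1 * 0 + 0) = (fun _ => 0 : C).
  by apply/funext => i; rewrite mulr0 addr0.
move=> E; apply/funext => i; have := congr1 (fun f => f i) E => /=.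
by rewrite mulN1r addNr.
Qed.

Lemma lin_trunc (A : op R I) : bounded_op A -> forall y m i,
  A (trunc y m) i = \sum_(c < m) vec y c * oapp (fun k => A (basis R k) i) 0 (@pickle_inv I c).
Proof.
move=> hA y; elim => [|m IH] i.
  rewrite big_ord0; have -> : trunc y 0 = (fun _ => 0) by apply/funext.
  by rewrite lin0.
rewrite big_ord_recr /= -IH /vec.
case E: (@pickle_inv I m) => [k|] /=; last first.
  rewrite mul0r addr0; congr (A _ i); apply/funext => i'; rewrite /trunc ltnS leq_eqVlt.
  case: eqP => //= e; exfalso; move: E; rewrite -e pickleK_inv //.
have pk : pickle k = m by have := @pickle_invK I m; rewrite E.
have -> : trunc y m.+1 = (fun i => y k * basis R k i + trunc y m i).
  apply/funext => i'; rewrite /trunc /basis ltnS leq_eqVlt.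
  case: (eqVneq i' k) => [->|nk]; first by rewrite pk eqxx ltnn mulr1 addr0.
  rewrite mulr0 add0r; case: eqP => //= e; exfalso; move/eqP: nk; apply.
  by apply: (pcan_inj (@pickleK_inv I)); rewrite e pk.
have [hl _] := hA.
by rewrite (hl _ _ _ (basis_l2 k) (trunc_l2 y m)) addrC.
Qed.

Lemma conv_aux (s : nat -> \bar R) (K : R) (r : nat -> R) :
  (s @ \oo --> 0%E) -> (forall m, ((r m)^+2)%:E <= K%:E * s m)%E -> r @ \oo --> 0.
Proof.
move=> hs hr; have [hfin hf] := (fine_cvgP _ _).1 hs.
apply/cvgr0Pnorm_lt => e e0.
have eK : 0 < e ^+ 2 / (`|K| + 1) by rewrite divr_gt0 ?exprn_gt0 // ltr_wpDl.
have hh := (cvgr0Pnorm_lt _).1 hf _ eK.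
near=> m.
have fm : s m \is a fin_num by near: m; exact: hfin.
have hm : `|fine (s m)| < e ^+ 2 / (`|K| + 1) by near: m; exact: hh.
have := hr m; rewrite -(fineK fm) -EFinM lee_fin => hrm.
have hK : K * fine (s m) <= `|K| * `|fine (s m)|.
  by rewrite -normrM ler_norm.
have h2 : `|K| * `|fine (s m)| < e ^+ 2.
  have h1 : `|K| * `|fine (s m)| <= `|K| * (e ^+ 2 / (`|K| + 1)).
    by rewrite ler_wpM2l // ltW.
  apply: (le_lt_trans h1); rewrite mulrA ltr_pdivrMr ?ltr_wpDl //.
  by rewrite mulrC ltr_pM2l ?exprn_gt0 // ltrDl.
have hr2 : r m ^+ 2 < e ^+ 2 by apply: (le_lt_trans hrm); apply: (le_lt_trans hK).
have := @ltr_pXn2r R 2 isT `|r m| e.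
rewrite !nnegrE normr_ge0 (ltW e0) => /(_ isT isT) <-.
by rewrite real_normK ?num_real.
Unshelve. all: by end_near.
Qed.

Lemma ReD (x y : C) : complex.Re (x + y) = complex.Re x + complex.Re y.
Proof. by case: x => ? ?; case: y. Qed.
Lemma ImD (x y : C) : complex.Im (x + y) = complex.Im x + complex.Im y.
Proof. by case: x => ? ?; case: y. Qed.
Lemma ReN (x : C) : complex.Re (- x) = - complex.Re x.
Proof. by case: x. Qed.
Lemma ImN (x : C) : complex.Im (- x) = - complex.Im x.
Proof. by case: x. Qed.
Lemma ReB (x y : C) : complex.Re (x - y) = complex.Re x - complex.Re y.
Proof. by rewrite ReD ReN. Qed.
Lemma ImB (x y : C) : complex.Im (x - y) = complex.Im x - complex.Im y.
Proof. by rewrite ImD ImN. Qed.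
Lemma ReM (x y : C) : complex.Re (x * y) = complex.Re x * complex.Re y - complex.Im x * complex.Im y.
Proof. by case: x => ? ?; case: y. Qed.
Lemma ImM (x y : C) : complex.Im (x * y) = complex.Re x * complex.Im y + complex.Im x * complex.Re y.
Proof. by case: x => ? ?; case: y. Qed.
Lemma ReC (x : C) : complex.Re (x^*) = complex.Re x.
Proof. by case: x. Qed.
Lemma ImC (x : C) : complex.Im (x^*) = - complex.Im x.
Proof. by case: x. Qed.

Lemma coord_le (z : I -> C) i : ((cnorm2 (z i))%:E <= sqnorm z)%E.
Proof.
rewrite /sqnorm; apply: esum_ge; exists [set i]; last by rewrite fsbig_set1.
by split => //; exact: finite_set1.
Qed.

Lemma tail_eq y m : sqnorm (fun i => -1 * trunc y m i + y i) =
  (\sum_(m <= c <oo) (cnorm2 (vec y c))%:E)%E.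
Proof.
rewrite sqnorm_series (nneseries_split 0 m); last by move=> c _; rewrite lee_fin cnorm2_ge0.
rewrite add0n big_nat_cond big1 ?add0e; last first.
  move=> c /andP[/andP[_ hc] _]; rewrite /vec; case E: pickle_inv => [i|] /=; last by rewrite cnorm2_0.
  have pi : pickle i = c by have := @pickle_invK I c; rewrite E.
  by rewrite /trunc pi hc mulN1r addNr cnorm2_0.
apply/congr_lim/funext => n; apply: eq_big_nat => c /andP[hc _].
rewrite /vec; case E: pickle_inv => [i|] //=.
have pi : pickle i = c by have := @pickle_invK I c; rewrite E.
by rewrite /trunc pi ltnNge hc /= mulr0 add0r.
Qed.

Lemma sq_le1 (x y z : R) : (x - y) ^+ 2 <= (y - x) ^+ 2 + z ^+ 2.
Proof. by rewrite -[x - y]opprB sqrrN lerDl sqr_ge0. Qed.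
Lemma sq_le2 (x y z : R) : (x - y) ^+ 2 <= z ^+ 2 + (y - x) ^+ 2.
Proof. by rewrite -[x - y]opprB sqrrN lerDr sqr_ge0. Qed.

Lemma coord_cvg (A : op R I) : bounded_op A -> forall y, l2 y -> forall i,
  ((complex.Re (A (trunc y m) i) : R) @[m --> \oo] --> (complex.Re (A y i) : R)) /\
  ((complex.Im (A (trunc y m) i) : R) @[m --> \oo] --> (complex.Im (A y i) : R)).
Proof.
move=> hA y hy i; have [hl [M hM]] := hA.
pose t := fun m => (fun i => -1 * trunc y m i + y i).
have At m : A (t m) = fun i => -1 * A (trunc y m) i + A y i.
  exact: (hl _ _ _ (trunc_l2 y m) hy).
have hs : (fun m => sqnorm (t m)) @ \oo --> (0 : \bar R).
  rewrite /t; under eq_fun do rewrite tail_eq.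
  apply: (@nneseries_tail_cvg R (fun c => (cnorm2 (vec y c))%:E) xpredT).
    by move: hy; rewrite /l2 sqnorm_series.
  by move=> c _; rewrite lee_fin cnorm2_ge0.
have tl2 m : l2 (t m).
  apply: le_lt_trans hy; apply: le_esum => j _; rewrite lee_fin /t /trunc.
  case: ifP => _; first by rewrite mulN1r addNr cnorm2_0 cnorm2_ge0.
  by rewrite mulr0 add0r.
have bound m : ((cnorm2 (A y i - A (trunc y m) i))%:E <= (M^+2)%:E * sqnorm (t m))%E.
  have h := coord_le (A (t m)) i.
  have e : A (t m) i = A y i - A (trunc y m) i by rewrite At /= mulN1r addrC.
  rewrite e in h; exact: (le_trans h (hM _ (tl2 m)).2).
split; apply: cvg_zero; apply: (conv_aux hs) => m; apply: le_trans (bound m);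
  rewrite lee_fin /cnorm2 /= ?ReB ?ImB !fctE;
  set a1 := complex.Re _; set a2 := complex.Re _; set b1 := complex.Im _; set b2 := complex.Im _;
  by [apply: sq_le1 | apply: sq_le2].
Qed.

Lemma maxBmax (x : R) : Num.max x 0 - Num.max (- x) 0 = x.
Proof.
by case: (lerP x 0) => hx; case: (lerP (-x) 0) => h2; lra.
Qed.

Lemma rsum_fin (g : I -> R) n : (forall i, (n <= pickle i)%N -> g i = 0) ->
  rsum g = \sum_(c < n) oapp g 0 (@pickle_inv I c).
Proof.
move=> hg; rewrite /rsum !esum_series; try by move=> i; rewrite lee_fin le_max lexx orbT.
have out c (h : (n <= c)%N) : forall (F : R -> R), F 0 = 0 ->
    oapp (fun i => (F (g i))%:E) 0%E (@pickle_inv I c) = 0%E.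
  move=> F F0; case E: pickle_inv => [i|] //=.
  have pi : pickle i = c by have := @pickle_invK I c; rewrite E.
  by rewrite hg ?pi // F0.
rewrite (@ser_fin _ n); last 2 first.
- by move=> c; case: pickle_inv => //= i; rewrite lee_fin le_max lexx orbT.
- by move=> c hc; apply: (out c hc (fun x => Num.max x 0)); rewrite maxxx.
rewrite (@ser_fin _ n); last 2 first.
- by move=> c; case: pickle_inv => //= i; rewrite lee_fin le_max lexx orbT.
- by move=> c hc; apply: (out c hc (fun x => Num.max (- x) 0)); rewrite oppr0 maxxx.
have e1 : forall (F : R -> R), \sum_(c < n) oapp (fun i => (F (g i))%:E) 0%E (@pickle_inv I c)
   = (\sum_(c < n) oapp (fun i => F (g i)) 0 (@pickle_inv I c))%:E.
  by move=> F; rewrite -sumEFin; apply: eq_bigr => c _; case: pickle_inv.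
rewrite (e1 (fun x => Num.max x 0)) (e1 (fun x => Num.max (- x) 0)) /= -sumrB.
apply: eq_bigr => c _; case: pickle_inv => [i|] /=; first exact: maxBmax.
by rewrite subr0.
Qed.

Lemma Re_sum n (F : 'I_n -> C) : complex.Re (\sum_(c < n) F c) = \sum_(c < n) complex.Re (F c).
Proof. by apply: (big_morph _ ReD). Qed.
Lemma Im_sum n (F : 'I_n -> C) : complex.Im (\sum_(c < n) F c) = \sum_(c < n) complex.Im (F c).
Proof. by apply: (big_morph _ ImD). Qed.

Lemma csum_fin (f : I -> C) n : (forall i, (n <= pickle i)%N -> f i = 0) ->
  csum f = \sum_(c < n) vec f c.
Proof.
move=> hf; rewrite /csum (@rsum_fin _ n); last by move=> i hi; rewrite hf.
rewrite (@rsum_fin _ n); last by move=> i hi; rewrite hf.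
apply/eqP; rewrite eq_complex Re_sum Im_sum; apply/andP; split; apply/eqP;
  by apply: eq_bigr => c _; rewrite /vec; case: pickle_inv.
Qed.

Definition ent (A : op R I) (a c : nat) : C :=
  match @pickle_inv I a, @pickle_inv I c with Some i, Some k => A (basis R k) i | _, _ => 0 end.
Definition mat (A : op R I) n : 'M[C]_n := \matrix_(a < n, c < n) ent A a c.

Lemma mat_psd (S : op R I) n : positive_op S -> psdm (mat S n).
Proof.
move=> [[hl hb] hpos] v.
pose vx (c : nat) : C := oapp (fun a : 'I_n => v 0 a) 0 (insub c).
pose y := fun i : I => (vx (pickle i))^*.
have ysupp : forall i, (n <= pickle i)%N -> y i = 0.
  by move=> i hi; rewrite /y /vx insubF ?ltnNge ?hi //= conjC0.
have hy : l2 y := fin_l2 ysupp.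
have := hpos y hy.
have ty : trunc y n = y.
  by apply/funext => i; rewrite /trunc; case: ltnP => // hi; rewrite ysupp.
have Sy : forall i, S y i = \sum_(c < n) vec y c * oapp (fun k => S (basis R k) i) 0 (@pickle_inv I c).
  by move=> i; rewrite -{1}ty lin_trunc.
rewrite /inner (@csum_fin _ n); last by move=> i hi; rewrite ysupp // conjC0 mulr0.
suff -> : \sum_(c < n) vec (fun i => S y i * (y i)^*) c = qf (mat S n) v v by [].
rewrite /qf !mxE.
under [RHS]eq_bigr do rewrite !mxE mulr_suml.
rewrite exchange_big /=; apply: eq_bigr => a _.
rewrite /vec; case E: (@pickle_inv I a) => [i|] /=; last first.
  by rewrite big1 // => c _; rewrite !mxE /ent E mulr0 mul0r.
have pi : pickle i = a by have := @pickle_invK I a; rewrite E.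
rewrite Sy mulr_suml; apply: eq_bigr => c _.
rewrite !mxE /ent E /y conjCK pi /vx valK /=.
case E2: (@pickle_inv I c) => [k|] /=; last by rewrite !mulr0 !mul0r.
have pk : pickle k = c by have := @pickle_invK I c; rewrite E2.
by rewrite /vec E2 /= pk valK /=; ring.
Qed.

Lemma ord_le_ser (F : nat -> \bar R) n : (forall k, (0 <= F k)%E) ->
  (\sum_(k < n) F k <= \sum_(k <oo) F k)%E.
Proof. by move=> F0; rewrite -(big_mkord xpredT); apply: nneseries_lim_ge. Qed.

Lemma hs_series (A : op R I) :
  hs_sq A = (\sum_(b <oo) \sum_(a <oo) (cnorm2 (ent A a b))%:E)%E.
Proof.
rewrite /hs_sq esum_series; last by move=> j; apply: esum_ge0 => i _; rewrite lee_fin cnorm2_ge0.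
apply: eq_eseriesr => b _; case E: (@pickle_inv I b) => [j|] /=.
  rewrite sqnorm_series; apply: eq_eseriesr => a _; rewrite /vec /ent E.
  by case: (@pickle_inv I a) => //=; rewrite cnorm2_0.
rewrite eseries0 // => a _ _; rewrite /ent E.
by case: (@pickle_inv I a); rewrite cnorm2_0.
Qed.

Lemma psum_le (A : op R I) n :
  ((\sum_(a < n) \sum_(b < n) cnorm2 (ent A a b))%:E <= hs_sq A)%E.
Proof.
rewrite hs_series -sumEFin.
under eq_bigr do rewrite -sumEFin.
rewrite exchange_big /=.
apply: le_trans (ord_le_ser _ _); last first.
  by move=> k; apply: nneseries_ge0 => i _ _; rewrite lee_fin cnorm2_ge0.
by apply: lee_sum => b _; apply: ord_le_ser => k; rewrite lee_fin cnorm2_ge0.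
Qed.

Definition wsum (S X T : op R I) n a b : C :=
  \sum_(c < n) (ent S a c * ent X c b - ent X a c * ent T c b).

Lemma mat_w (S X T : op R I) n (a b : 'I_n) :
  (mat S n *m mat X n - mat X n *m mat T n) a b = wsum S X T n a b.
Proof.
rewrite !mxE /wsum sumrB; congr (_ - _); apply: eq_bigr => c _; rewrite !mxE //.
Qed.

Lemma bounded_l2 (A : op R I) x : bounded_op A -> l2 x -> l2 (A x).
Proof. by move=> [_ [M hM]] hx; exact: (hM _ hx).1. Qed.

Lemma w_cvg (S X T : op R I) : bounded_op S -> bounded_op X -> bounded_op T ->
  forall a b,
  ((complex.Re (wsum S X T n a b) : R) @[n --> \oo] -->
      (complex.Re (ent (op_sub (op_comp S X) (op_comp X T)) a b) : R)) /\
  ((complex.Im (wsum S X T n a b) : R) @[n --> \oo] -->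
      (complex.Im (ent (op_sub (op_comp S X) (op_comp X T)) a b) : R)).
Proof.
move=> hS hX hT a b.
case Ea: (@pickle_inv I a) => [i|]; last first.
  have w0 n : wsum S X T n a b = 0.
    by rewrite /wsum big1 // => c _; rewrite /ent Ea !mul0r subrr.
  by rewrite /ent Ea /=; split; under eq_fun do rewrite w0; exact: cvg_cst.
case Eb: (@pickle_inv I b) => [j|]; last first.
  have w0 n : wsum S X T n a b = 0.
    rewrite /wsum big1 // => c _; rewrite /ent Ea Eb.
    by case: (@pickle_inv I c) => /= [k|]; rewrite ?mulr0 ?mul0r ?subr0.
  by rewrite /ent Ea Eb /=; split; under eq_fun do rewrite w0; exact: cvg_cst.
have e1 : forall n, wsum S X T n a b =
    S (trunc (X (basis R j)) n) i - X (trunc (T (basis R j)) n) i.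
  move=> n; rewrite /wsum sumrB !lin_trunc //; congr (_ - _); apply: eq_bigr => c _;
    rewrite /ent /vec Ea Eb; case: (@pickle_inv I c) => [k|] //=; exact: mulrC.
have eZ : ent (op_sub (op_comp S X) (op_comp X T)) a b = S (X (basis R j)) i - X (T (basis R j)) i.
  by rewrite /ent Ea Eb.
have [r1 i1] := coord_cvg hS (bounded_l2 hX (basis_l2 j)) i.
have [r2 i2] := coord_cvg hX (bounded_l2 hT (basis_l2 j)) i.
rewrite eZ ReB ImB; split.
  under eq_fun do rewrite e1 ReB.
  exact: cvgB r1 r2.
under eq_fun do rewrite e1 ImB.
exact: cvgB i1 i2.
Qed.
End Inf.

Section Fin5.
Variables (R : realType) (I : countType).
Local Notation C := (R[i]).
Local Open Scope complex_scope.

Lemma cn2 (z : C) : `|z| ^+ 2 = (cnorm2 z)%:C.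
Proof. by rewrite -add_Re2_Im2. Qed.

Lemma rcD (x y : R) : ((x + y)%:C = x%:C + y%:C :> C).
Proof. by apply/eqP; rewrite eq_complex /= addr0 !eqxx. Qed.

Lemma rcM (x y : R) : ((x * y)%:C = x%:C * y%:C :> C).
Proof. by apply/eqP; rewrite eq_complex /= !mulr0 !mul0r subr0 addr0 !eqxx. Qed.

Lemma rc_sum n (F : 'I_n -> R) : ((\sum_(i < n) F i)%:C = \sum_(i < n) (F i)%:C :> C).
Proof. by apply: (big_morph _ rcD). Qed.

Lemma fro_sum n (M : 'M[C]_n) : fro M = (\sum_a \sum_b cnorm2 (M a b))%:C.
Proof.
rewrite froE rc_sum; apply: eq_bigr => a _; rewrite rc_sum; apply: eq_bigr => b _.
exact: cn2.
Qed.

Lemma sum_mono (F : nat -> R) K n : (K <= n)%N -> (forall i, 0 <= F i) ->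
  \sum_(i < K) F i <= \sum_(i < n) F i.
Proof.
move=> Kn F0; rewrite -!(big_mkord xpredT) (@big_cat_nat _ _ _ K 0 n _ _ (leq0n K) Kn) /= lerDl.
by apply: sumr_ge0 => i _.
Qed.

Lemma cvg_sumK (f : nat -> nat -> R) (l : nat -> R) K :
  (forall i, f i n @[n --> \oo] --> l i) ->
  \sum_(i < K) f i n @[n --> \oo] --> \sum_(i < K) l i.
Proof.
move=> h; elim: K => [|K IH].
  under eq_fun do rewrite big_ord0.
  by rewrite big_ord0; exact: cvg_cst.
under eq_fun do rewrite big_ord_recr /=.
rewrite big_ord_recr /=.
exact: cvgD IH (h K).
Qed.

Lemma cn2_cvg (w : nat -> C) (z : C) :
  (complex.Re (w n) : R) @[n --> \oo] --> (complex.Re z : R) ->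
  (complex.Im (w n) : R) @[n --> \oo] --> (complex.Im z : R) ->
  cnorm2 (w n) @[n --> \oo] --> cnorm2 z.
Proof.
move=> hr hi; have h := cvgD (cvgM hr hr) (cvgM hi hi).
rewrite /cnorm2 !expr2; exact: h.
Qed.

Lemma hs_ge0 (A : op R I) : (0 <= hs_sq A)%E.
Proof. by apply: esum_ge0 => j _; apply: esum_ge0 => i _; rewrite lee_fin cnorm2_ge0. Qed.

Lemma key (S X T : op R I) : positive_op S -> positive_op T -> bounded_op X -> forall K,
  ((\sum_(a < K) \sum_(b < K) cnorm2 (ent (op_sub (op_comp S X) (op_comp X T)) a b))%:E
     <= hs_sq X * (hs_sq S + hs_sq T))%E.
Proof.
move=> hS hT hX K.
set B := (hs_sq X * _)%E.
have B0 : (0 <= B)%E by rewrite mule_ge0 ?adde_ge0 ?hs_ge0.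
have [Bf|Bnf] := boolP (B \is a fin_num); last first.
  have -> : B = +oo%E.
    by move/fin_numPn: Bnf => [h|->] //; move: B0; rewrite h.
  exact: leey.
rewrite -(fineK Bf) lee_fin.
have hF : (\sum_(a < K) \sum_(b < K) cnorm2 (wsum S X T n a b)) @[n --> \oo] -->
    (\sum_(a < K) \sum_(b < K) cnorm2 (ent (op_sub (op_comp S X) (op_comp X T)) a b)).
  apply: (@cvg_sumK (fun a n => \sum_(b < K) cnorm2 (wsum S X T n a b))
     (fun a => \sum_(b < K) cnorm2 (ent (op_sub (op_comp S X) (op_comp X T)) a b)) K) => a.
  apply: (@cvg_sumK (fun b n => cnorm2 (wsum S X T n a b))
     (fun b => cnorm2 (ent (op_sub (op_comp S X) (op_comp X T)) a b)) K) => b.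
  have [h1 h2] := w_cvg hS.1 hX hT.1 a b.
  exact: cn2_cvg h1 h2.
rewrite -(cvg_lim (@Rhausdorff R) hF).
apply: limr_le; first exact: cvgP hF.
near=> n.
have Kn : (K <= n)%N by near: n; exact: nbhs_infty_ge.
have h1 : \sum_(a < K) \sum_(b < K) cnorm2 (wsum S X T n a b) <=
          \sum_(a < n) \sum_(b < n) cnorm2 (wsum S X T n a b).
  apply: (@le_trans _ _ (\sum_(a < K) \sum_(b < n) cnorm2 (wsum S X T n a b))).
    apply: ler_sum => a _.
    by apply: (@sum_mono (fun b => cnorm2 (wsum S X T n a b)) K n Kn) => b; exact: cnorm2_ge0.
  apply: (@sum_mono (fun a => \sum_(b < n) cnorm2 (wsum S X T n a b)) K n Kn).
  by move=> a; apply: sumr_ge0 => b _; exact: cnorm2_ge0.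
have h3 := @fin_main _ n (mat S n) (mat T n) (mat X n) (@mat_psd _ _ S n hS) (@mat_psd _ _ T n hT).
rewrite !fro_sum -rcD -rcM lecR in h3.
apply: (le_trans h1); rewrite -lee_fin (fineK Bf).
have e : \sum_(a < n) \sum_(b < n) cnorm2 (wsum S X T n a b) =
   \sum_(a < n) \sum_(b < n) cnorm2 ((mat S n *m mat X n - mat X n *m mat T n) a b).
  by apply: eq_bigr => a _; apply: eq_bigr => b _; rewrite mat_w.
rewrite e; rewrite -lee_fin in h3; apply: (le_trans h3).
rewrite EFinM EFinD; apply: lee_pmul.
- by rewrite lee_fin; apply: sumr_ge0 => a _; apply: sumr_ge0 => b _; exact: cnorm2_ge0.
- by rewrite adde_ge0 // lee_fin; apply: sumr_ge0 => a _; apply: sumr_ge0 => b _; exact: cnorm2_ge0.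
- by under eq_bigr do under eq_bigr do rewrite mxE; exact: psum_le.
- by apply: leeD; under eq_bigr do under eq_bigr do rewrite mxE; exact: psum_le.
Unshelve. all: by end_near.
Qed.

Lemma ser_le (F : nat -> \bar R) (B : \bar R) : (forall k, (0 <= F k)%E) ->
  (forall K, (\sum_(k < K) F k <= B)%E) -> (\sum_(k <oo) F k <= B)%E.
Proof.
move=> F0 hK; apply: lime_le; first exact: is_cvg_nneseries.
by apply: nearW => K; rewrite big_mkord; exact: hK.
Qed.

Theorem main9 (S T X : op R I) :
  positive_op S -> positive_op T -> bounded_op X ->
  (hs_norm (op_sub (op_comp S X) (op_comp X T))
     <= hs_norm X * sqrte (hs_norm S ^+ 2 + hs_norm T ^+ 2))%E.
Proof.
move=> hS hT hX.
set Z := op_sub (op_comp S X) (op_comp X T).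
have hZ : (hs_sq Z <= hs_sq X * (hs_sq S + hs_sq T))%E.
  rewrite hs_series; apply: ser_le => [b|K].
    by apply: nneseries_ge0 => a _ _; rewrite lee_fin cnorm2_ge0.
  rewrite -nneseries_sum; last by move=> b a _; rewrite lee_fin cnorm2_ge0.
  apply: ser_le => [a|K'].
    by apply: sume_ge0 => b _; rewrite lee_fin cnorm2_ge0.
  under eq_bigr do rewrite sumEFin.
  rewrite sumEFin.
  apply: le_trans (key hS hT hX (maxn K K')).
  rewrite lee_fin.
  apply: (@le_trans _ _ (\sum_(a < K') \sum_(b < maxn K K') cnorm2 (ent Z a b))).
    apply: ler_sum => a _.
    by apply: (@sum_mono (fun b => cnorm2 (ent Z a b)) K (maxn K K') (leq_maxl _ _)) => b;
      exact: cnorm2_ge0.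
  apply: (@sum_mono (fun a => \sum_(b < maxn K K') cnorm2 (ent Z a b)) K' (maxn K K') (leq_maxr _ _)).
  by move=> a; apply: sumr_ge0 => b _; exact: cnorm2_ge0.
rewrite /hs_norm !sqr_sqrte ?hs_ge0 // -sqrteM ?hs_ge0 // lee_sqrt //.
by rewrite mule_ge0 ?adde_ge0 ?hs_ge0.
Qed.
End Fin5.


End Helpers.

Theorem mainTheorem9 (R : realType) (I : countType) (S T X : op R I) :
  positive_op S -> positive_op T -> bounded_op X ->
  (hs_norm (op_sub (op_comp S X) (op_comp X T))
     <= hs_norm X * sqrte (hs_norm S ^+ 2 + hs_norm T ^+ 2))%E.
Proof. exact: Helpers.main9. Qed.
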